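(* Let $a,q,\alpha,\beta,\gamma,\delta\in\mathbb{C}$ with $a\neq 0$ and $\gamma\notin\{0,-1,-2,\dots\}$, and set $\varepsilon=\alpha+\beta-\gamma-\delta+1$. Let $(d_n)_{n\ge0}$ be defined by $d_0=1$, $d_1=\frac{q}{a\gamma}$, and for $n\ge1$ $$d_{n+1}=\frac{(1+a)n^2+\big(\gamma+\varepsilon-1+a(\gamma+\delta-1)\big)n+q}{a(n+1)(n+\gamma)}\,d_n-\frac{(n-1+\alpha)(n-1+\beta)}{a(n+1)(n+\gamma)}\,d_{n-1},$$ so that $y(x)=\sum_{n\ge0}d_nx^n$ is the formal power-series solution at $x=0$ (exponent $0$) of Heun's equation $$y''+\Big(\frac{\gamma}{x}+\frac{\delta}{x-1}+\frac{\varepsilon}{x-a}\Big)y'+\frac{\alpha\beta x-q}{x(x-1)(x-a)}\,y=0.$$ Then $\sum_{n\ge0}d_nx^n$ converges absolutely for every $x\in\mathbb{C}$ satisfying $$\left|\frac{1+a}{a}\,x\right|+\left|\frac{1}{a}\,x^2\right|<1.$$ *)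

(* Defs.v *)
From Stdlib Require Import Reals.
Open Scope R_scope.

Definition Cx : Type := (R * R)%type.

Definition RtoC (r : R) : Cx := (r, 0).
Definition Czero : Cx := (0, 0).
Definition Cone : Cx := (1, 0).
Definition Cadd (z w : Cx) : Cx := (fst z + fst w, snd z + snd w).
Definition Copp (z : Cx) : Cx := (- fst z, - snd z).
Definition Csub (z w : Cx) : Cx := Cadd z (Copp w).
Definition Cmul (z w : Cx) : Cx :=
  (fst z * fst w - snd z * snd w, fst z * snd w + snd z * fst w).
Definition Cinv (z : Cx) : Cx :=
  (fst z / (fst z ^ 2 + snd z ^ 2), - snd z / (fst z ^ 2 + snd z ^ 2)).
Definition Cdiv (z w : Cx) : Cx := Cmul z (Cinv w).
Fixpoint Cpow (z : Cx) (n : nat) : Cx :=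
  match n with O => Cone | S m => Cmul z (Cpow z m) end.
Definition Cmod (z : Cx) : R := sqrt (fst z ^ 2 + snd z ^ 2).
Definition natC (n : nat) : Cx := RtoC (INR n).

Definition heun_eps (al be ga de : Cx) : Cx :=
  Cadd (Csub (Csub (Cadd al be) ga) de) Cone.

Definition heun_step (a q al be ga de : Cx) (n : nat) (dn dnm1 : Cx) : Cx :=
  let ep := heun_eps al be ga de in
  let nC := natC n in
  let den := Cmul a (Cmul (natC (S n)) (Cadd nC ga)) in
  let A := Cadd (Cadd (Cmul (Cadd Cone a) (Cmul nC nC))
                      (Cmul (Cadd (Csub (Cadd ga ep) Cone)
                                  (Cmul a (Csub (Cadd ga de) Cone))) nC)) q in
  let B := Cmul (Cadd (Csub nC Cone) al) (Cadd (Csub nC Cone) be) in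
  Csub (Cmul (Cdiv A den) dn) (Cmul (Cdiv B den) dnm1).

(* heun_pair n = (d_n, d_{n+1}) *)
Fixpoint heun_pair (a q al be ga de : Cx) (n : nat) : Cx * Cx :=
  match n with
  | O => (Cone, Cdiv q (Cmul a ga))
  | S m => let p := heun_pair a q al be ga de m in
           (snd p, heun_step a q al be ga de (S m) (snd p) (fst p))
  end.

Definition heun_d (a q al be ga de : Cx) (n : nat) : Cx := fst (heun_pair a q al be ga de n).

(* Main.v *)
From Stdlib Require Import Reals Lra Lia Psatz.
From Coquelicot Require Import Coquelicot.
Require Import Defs.
Open Scope R_scope.

Local Notation CM := Coquelicot.Complex.Cmod.
Local Notation R2C := Coquelicot.Complex.RtoC.

Lemma natC_S n : natC (S n) = (natC n + R2C 1)%C.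
Proof. unfold natC. rewrite S_INR. now rewrite RtoC_plus. Qed.

Lemma Cmod_natC n : CM (natC n) = INR n.
Proof. unfold natC. rewrite Cmod_R. apply Rabs_pos_eq, pos_INR. Qed.

Lemma heun_rec a q al be ga de m :
  heun_d a q al be ga de (S (S m)) =
  heun_step a q al be ga de (S m) (heun_d a q al be ga de (S m)) (heun_d a q al be ga de m).
Proof. reflexivity. Qed.

Lemma step_bound a q al be ga de n dn dm :
  CM (heun_step a q al be ga de n dn dm) <=
  CM (Defs.Cdiv (Cadd (Cadd (Cmul (Cadd Cone a) (Cmul (natC n) (natC n)))
                      (Cmul (Cadd (Csub (Cadd ga (heun_eps al be ga de)) Cone)
                                  (Cmul a (Csub (Cadd ga de) Cone))) (natC n))) q)
        (Cmul a (Cmul (natC (S n)) (Cadd (natC n) ga)))) * CM dn +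
  CM (Defs.Cdiv (Cmul (Cadd (Csub (natC n) Cone) al) (Cadd (Csub (natC n) Cone) be))
        (Cmul a (Cmul (natC (S n)) (Cadd (natC n) ga)))) * CM dm.
Proof.
  unfold heun_step. cbv zeta.
  change (Csub ?X ?Y) with (Cplus X (Copp Y)).
  eapply Rle_trans. apply Cmod_triangle.
  rewrite Cmod_opp. change Cmul with Cmult. rewrite !Cmod_mult. right; reflexivity.
Qed.

Lemma G (u v a g : C) (n : nat) (M : R) : a <> R2C 0 -> 0 < M -> M <= CM (natC n + g)%C ->
  CM ((u * natC n + v) / (a * ((natC n + R2C 1) * (natC n + g))))%C <= (CM u + CM v) / (CM a * M).
Proof.
  intros Ha HM HMg.
  assert (H1 : CM (natC n + R2C 1)%C = INR n + 1).
  { rewrite <- natC_S, Cmod_natC, S_INR. reflexivity. }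
  assert (Hn : 0 <= INR n) by apply pos_INR.
  assert (Hpa : 0 < CM a) by (apply Cmod_gt_0; auto).
  assert (Hg : 0 < CM (natC n + g)%C) by lra.
  assert (Hden : (a * ((natC n + R2C 1) * (natC n + g)))%C <> R2C 0).
  { intro E. apply (f_equal CM) in E. rewrite !Cmod_mult, H1, Cmod_R, Rabs_R0 in E.
    assert (0 < CM a * ((INR n + 1) * CM (natC n + g)%C)).
    { apply Rmult_lt_0_compat; auto. apply Rmult_lt_0_compat; lra. } lra. }
  rewrite Cmod_div by auto. rewrite !Cmod_mult, H1.
  assert (Hnum : CM (u * natC n + v)%C <= (CM u + CM v) * (INR n + 1)).
  { eapply Rle_trans. apply Cmod_triangle. rewrite Cmod_mult, Cmod_natC.
    pose proof (Cmod_ge_0 u). pose proof (Cmod_ge_0 v). nra. }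
  set (X := CM (u * natC n + v)%C) in *. set (K := CM u + CM v) in *.
  set (Y := CM (natC n + g)%C) in *.
  assert (HK : 0 <= K) by (pose proof (Cmod_ge_0 u); pose proof (Cmod_ge_0 v); unfold K; lra).
  unfold Rdiv.
  apply Rle_trans with (K * (INR n + 1) * / (CM a * ((INR n + 1) * Y))).
  { apply Rmult_le_compat_r; auto. left. apply Rinv_0_lt_compat.
    apply Rmult_lt_0_compat; auto. apply Rmult_lt_0_compat; lra. }
  replace (K * (INR n + 1) * / (CM a * ((INR n + 1) * Y))) with (K * / (CM a * Y)) by (field; lra).
  apply Rmult_le_compat_l; auto. apply Rinv_le_contravar.
  apply Rmult_lt_0_compat; auto. apply Rmult_le_compat_l; lra.
Qed.

Lemma nz_lemma (g : C) n M : 0 < M -> M <= CM (natC n + g)%C ->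
  (natC n + R2C 1)%C <> R2C 0 /\ (natC n + g)%C <> R2C 0.
Proof.
  intros HM H. split.
  - rewrite <- natC_S. intro E. apply (f_equal CM) in E.
    rewrite Cmod_natC, Cmod_R, Rabs_R0, S_INR in E. pose proof (pos_INR n). lra.
  - intro E. rewrite E, Cmod_R, Rabs_R0 in H. lra.
Qed.

Ltac toC := change Cadd with Cplus in *; change Cmul with Cmult in *;
  change Defs.Cdiv with Coquelicot.Complex.Cdiv in *; change Csub with Cminus in *;
  change Cone with (R2C 1) in *; change Defs.Copp with Coquelicot.Complex.Copp in *.

Definition KA (a q al be ga de : C) : R :=
  CM (ga + heun_eps al be ga de - R2C 1 + a * (ga + de - R2C 1) - (R2C 1 + a) * (R2C 1 + ga))%C
  + CM (q - (R2C 1 + a) * ga)%C.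
Definition KB (al be ga : C) : R :=
  CM (al + be - R2C 1 - R2C 1 - R2C 1 - ga)%C + CM ((al - R2C 1) * (be - R2C 1) - ga)%C.

Lemma coefA a q al be ga de n M : a <> R2C 0 -> 0 < M -> M <= CM (natC n + ga)%C ->
  CM (Defs.Cdiv (Cadd (Cadd (Cmul (Cadd Cone a) (Cmul (natC n) (natC n)))
                      (Cmul (Cadd (Csub (Cadd ga (heun_eps al be ga de)) Cone)
                                  (Cmul a (Csub (Cadd ga de) Cone))) (natC n))) q)
        (Cmul a (Cmul (natC (S n)) (Cadd (natC n) ga))))
  <= CM ((R2C 1 + a) / a)%C + KA a q al be ga de / (CM a * M).
Proof.
  intros Ha HM HMg. destruct (nz_lemma ga n M HM HMg) as [N1 N2].
  unfold KA. set (ep := heun_eps al be ga de). toC. rewrite natC_S.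
  set (c := (ga + ep - R2C 1 + a * (ga + de - R2C 1) - (R2C 1 + a) * (R2C 1 + ga))%C).
  set (c0 := (q - (R2C 1 + a) * ga)%C).
  replace (_ / _)%C with ((R2C 1 + a) / a + (c * natC n + c0) / (a * ((natC n + R2C 1) * (natC n + ga))))%C.
  2:{ unfold c, c0. field. auto. }
  eapply Rle_trans. apply Cmod_triangle. apply Rplus_le_compat_l. apply G; auto.
Qed.

Lemma coefB a al be ga n M : a <> R2C 0 -> 0 < M -> M <= CM (natC n + ga)%C ->
  CM (Defs.Cdiv (Cmul (Cadd (Csub (natC n) Cone) al) (Cadd (Csub (natC n) Cone) be))
        (Cmul a (Cmul (natC (S n)) (Cadd (natC n) ga))))
  <= CM (/ a)%C + KB al be ga / (CM a * M).
Proof.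
  intros Ha HM HMg. destruct (nz_lemma ga n M HM HMg) as [N1 N2].
  unfold KB. toC. rewrite natC_S.
  set (c := (al + be - R2C 1 - R2C 1 - R2C 1 - ga)%C).
  set (c0 := ((al - R2C 1) * (be - R2C 1) - ga)%C).
  replace (_ / _)%C with ((/ a) + (c * natC n + c0) / (a * ((natC n + R2C 1) * (natC n + ga))))%C.
  2:{ unfold c, c0. field. auto. }
  eapply Rle_trans. apply Cmod_triangle. apply Rplus_le_compat_l. apply G; auto.
Qed.

Lemma Cmod_Cpow x n : CM (Defs.Cpow x n) = CM x ^ n.
Proof.
  induction n; simpl.
  - apply (Cmod_1).
  - change Cmul with Cmult. rewrite Cmod_mult, IHn. reflexivity.
Qed.

Lemma sum_nonneg (f : nat -> R) n : (forall k, 0 <= f k) -> 0 <= sum_f_R0 f n.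
Proof. intros H; induction n; simpl; auto. specialize (H (S n)). lra. Qed.

Lemma sum_mono (f : nat -> R) i j : (forall k, 0 <= f k) -> (i <= j)%nat -> sum_f_R0 f i <= sum_f_R0 f j.
Proof.
  intros H Hij. induction Hij. lra. simpl. specialize (H (S m)). lra.
Qed.

Lemma term_le_sum (f : nat -> R) k : (forall k, 0 <= f k) -> f k <= sum_f_R0 f k.
Proof. intros H. destruct k; simpl. lra. pose proof (sum_nonneg f k H). lra. Qed.

Theorem mainTheorem3 (a q al be ga de x : Cx)
  (ha : a <> Czero)
  (hga : forall k : nat, ga <> RtoC (- INR k))
  (hx : Cmod (Cmul (Cdiv (Cadd Cone a) a) x) + Cmod (Cmul (Cinv a) (Cpow x 2)) < 1) :
  exists l : R,
    Un_cv (fun N => sum_f_R0 (fun n => Cmod (Cmul (heun_d a q al be ga de n) (Cpow x n))) N) l.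
Proof.
  set (d := heun_d a q al be ga de).
  change (CM (Cmult ((R2C 1 + a)/a)%C x) + CM (Cmult (/ a)%C (Defs.Cpow x 2)) < 1) in hx.
  rewrite !Cmod_mult, Cmod_Cpow in hx.
  assert (Ha : a <> R2C 0) by exact ha.
  set (r := CM x) in *. set (p := CM ((R2C 1 + a)/a)%C) in *. set (s := CM (/ a)%C) in *.
  assert (Hr : 0 <= r) by apply Cmod_ge_0.
  assert (Hp : 0 <= p) by apply Cmod_ge_0.
  assert (Hs : 0 <= s) by apply Cmod_ge_0.
  assert (Hpa : 0 < CM a) by (apply Cmod_gt_0; auto).
  set (th := p * r + s * r ^ 2) in *.
  set (eta := (1 - th) / (2 * (1 + r + r ^ 2))).
  assert (Hr2 : 0 <= r ^ 2) by (apply pow_le; auto).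
  assert (Heta : 0 < eta).
  { unfold eta. apply Rdiv_lt_0_compat; lra. }
  set (c1 := (p + eta) * r). set (c2 := (s + eta) * r ^ 2).
  assert (Hc1 : 0 <= c1) by (unfold c1; apply Rmult_le_pos; lra).
  assert (Hc2 : 0 <= c2) by (unfold c2; apply Rmult_le_pos; lra).
  assert (Hc : c1 + c2 < 1).
  { assert (E : c1 + c2 = th + eta * (r + r ^ 2)) by (unfold c1, c2, th; ring).
    rewrite E. assert (eta * (r + r ^ 2) < (1 - th) / 2); [|lra].
    unfold eta. apply Rmult_lt_reg_r with (2 * (1 + r + r ^ 2)). lra.
    field_simplify; try lra; nra. }
  set (KA0 := KA a q al be ga de). set (KB0 := KB al be ga).
  assert (HKA : 0 <= KA0) by (unfold KA0, KA; pose proof (Cmod_ge_0 (q - (R2C 1 + a) * ga)%C);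
     match goal with |- 0 <= CM ?u + _ => pose proof (Cmod_ge_0 u) end; lra).
  assert (HKB : 0 <= KB0) by (unfold KB0, KB; pose proof (Cmod_ge_0 ((al - R2C 1) * (be - R2C 1) - ga)%C);
     match goal with |- 0 <= CM ?u + _ => pose proof (Cmod_ge_0 u) end; lra).
  set (M := (KA0 + KB0) / (CM a * eta) + 1).
  assert (HM : 0 < M).
  { unfold M. assert (0 <= (KA0 + KB0) / (CM a * eta)); [|lra].
    apply Rdiv_le_0_compat; [lra|]. apply Rmult_lt_0_compat; lra. }
  assert (HKAe : KA0 / (CM a * M) <= eta /\ KB0 / (CM a * M) <= eta).
  { assert (E : CM a * M * eta = KA0 + KB0 + CM a * eta).
    { unfold M. field. lra. }
    assert (0 < CM a * M) by (apply Rmult_lt_0_compat; lra).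
    split; apply Rle_div_l; try lra; rewrite Rmult_comm, E; nra. }
  destruct (INR_unbounded (CM ga + M)) as [N0 HN0].
  assert (Hbig : forall n, (N0 <= n)%nat -> M <= CM (natC n + ga)%C).
  { intros n Hn. apply le_INR in Hn.
    pose proof (Cmod_triangle (natC n + ga)%C (- ga)%C) as T.
    assert (E : (natC n + ga + - ga)%C = natC n :> C) by ring. rewrite E in T.
    rewrite Cmod_opp, Cmod_natC in T. lra. }
  assert (Hrec : forall m, (N0 <= m)%nat ->
     CM (d (S (S m))) <= (p + eta) * CM (d (S m)) + (s + eta) * CM (d m)).
  { intros m Hm. unfold d. rewrite heun_rec.
    eapply Rle_trans. apply step_bound.
    assert (HSm : (N0 <= S m)%nat) by lia.
    pose proof (coefA a q al be ga de (S m) M Ha HM (Hbig _ HSm)) as CA.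
    pose proof (coefB a al be ga (S m) M Ha HM (Hbig _ HSm)) as CB.
    fold KA0 in CA. fold KB0 in CB. fold p in CA. fold s in CB.
    pose proof (Cmod_ge_0 (heun_d a q al be ga de (S m))).
    pose proof (Cmod_ge_0 (heun_d a q al be ga de m)).
    apply Rplus_le_compat; apply Rmult_le_compat_r; lra. }
  set (e := fun n => Cmod (Cmul (d n) (Cpow x n))).
  assert (He : forall n, e n = CM (d n) * r ^ n).
  { intro n. unfold e. change (CM (Cmult (d n) (Defs.Cpow x n)) = CM (d n) * r ^ n).
    rewrite Cmod_mult, Cmod_Cpow. reflexivity. }
  assert (He0 : forall n, 0 <= e n).
  { intro n. rewrite He. apply Rmult_le_pos. apply Cmod_ge_0. apply pow_le; auto. }
  assert (Hrec2 : forall m, (N0 <= m)%nat -> e (S (S m)) <= c1 * e (S m) + c2 * e m).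
  { intros m Hm. rewrite !He. specialize (Hrec m Hm).
    assert (Hrm : 0 <= r ^ m) by (apply pow_le; auto).
    unfold c1, c2. simpl pow in *.
    pose proof (Cmod_ge_0 (d (S m))). pose proof (Cmod_ge_0 (d m)).
    assert (Hk : CM (d (S (S m))) * (r * (r * r ^ m)) <=
       ((p + eta) * CM (d (S m)) + (s + eta) * CM (d m)) * (r * (r * r ^ m))).
    { apply Rmult_le_compat_r; auto. apply Rmult_le_pos; auto. apply Rmult_le_pos; auto. }
    eapply Rle_trans. exact Hk. right. ring. }
  set (T := sum_f_R0 e).
  assert (HT : forall j, T (S (S (N0 + j)%nat)) <= T (S N0) + c1 * T (S (N0 + j)%nat) + c2 * T (N0 + j)%nat).
  { induction j.
    - rewrite Nat.add_0_r.
      change (T (S (S N0))) with (T (S N0) + e (S (S N0))).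
      pose proof (Hrec2 N0 (le_n _)).
      assert (A1 : e (S N0) <= T (S N0)) by (apply term_le_sum; auto).
      assert (A2 : e N0 <= T N0) by (apply term_le_sum; auto).
      assert (c1 * e (S N0) <= c1 * T (S N0)) by (apply Rmult_le_compat_l; auto).
      assert (c2 * e N0 <= c2 * T N0) by (apply Rmult_le_compat_l; auto).
      lra.
    - replace (N0 + S j)%nat with (S (N0 + j)) by lia.
      change (T (S (S (S (N0 + j))))) with (T (S (S (N0 + j))) + e (S (S (S (N0 + j))))).
      change (T (S (S (N0 + j)))) with (T (S (N0 + j)) + e (S (S (N0 + j)))).
      change (T (S (S (N0 + j)))) with (T (S (N0 + j)) + e (S (S (N0 + j)))) in IHj.
      change (T (S (N0 + j))) with (T (N0 + j)%nat + e (S (N0 + j))).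
      change (T (S (N0 + j))) with (T (N0 + j)%nat + e (S (N0 + j))) in IHj.
      pose proof (Hrec2 (S (N0 + j)) ltac:(lia)).
      lra. }
  set (B := T (S N0) / (1 - (c1 + c2))).
  assert (HB : forall j, T j <= B).
  { intro j.
    assert (HTj : T j <= T (S (S (N0 + j)%nat))) by (apply sum_mono; auto; lia).
    specialize (HT j).
    assert (H1 : T (S (N0 + j)%nat) <= T (S (S (N0 + j)%nat))) by (apply sum_mono; auto).
    assert (H2 : T (N0 + j)%nat <= T (S (S (N0 + j)%nat))) by (apply sum_mono; auto).
    assert (H3 : T (S (S (N0 + j)%nat)) <= B).
    { unfold B. apply Rle_div_r; [lra|]. nra. }
    lra. }
  destruct (growing_cv T) as [l Hl].
  - intro n. unfold T. simpl. specialize (He0 (S n)). lra.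
  - exists B. intros y [i ->]. apply HB.
  - exists l. exact Hl.
Qed.
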